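(* Let $n\ge2$, $\kappa\ge1$. The map $\psi:\mathbf S_n\to GL(n\kappa^n,\mathbb R)$ defined by $\psi(\sigma)=P_\sigma\otimes\mathrm{sgn}(\sigma)T_\sigma$ is a group homomorphism, i.e. $\psi(\mu\circ\sigma)=\psi(\mu)\psi(\sigma)$ for all $\mu,\sigma\in\mathbf S_n$; hence $\psi$ is a linear representation of $\mathbf S_n$ on $\mathcal G_{[n;\kappa]}\cong\mathbb R^{n\kappa^n}$.
   Context: $\delta_m^j$ is the $j$-th column of $I_m$, $\mathbf 1_m$ the all-ones column vector of length $m$. For $\sigma\in\mathbf S_n$, $P_\sigma=[\delta_n^{\sigma(1)},\dots,\delta_n^{\sigma(n)}]\in\mathbb R^{n\times n}$. For $i=1,\dots,n$, $\Phi_i=\mathbf 1_{\kappa^{i-1}}^T\otimes I_\kappa\otimes\mathbf 1_{\kappa^{n-i}}^T\in\mathbb R^{\kappa\times\kappa^n}$. The Khatri–Rao product of $A\in\mathbb R^{p\times m}$ and $B\in\mathbb R^{q\times m}$ is $A*B=[\mathrm{Col}_1(A)\otimes\mathrm{Col}_1(B),\dots,\mathrm{Col}_m(A)\otimes\mathrm{Col}_m(B)]$, and $T_\sigma=\Phi_{\sigma^{-1}(1)}*\cdots*\Phi_{\sigma^{-1}(n)}\in\mathbb R^{\kappa^n\times\kappa^n}$. $\mathcal G_{[n;\kappa]}$ (finite games with $n$ players each having $\kappa$ strategies) is identified with $\mathbb R^{n\kappa^n}$ via the structure vector $V_G=[V_1^c,\dots,V_n^c]$, where $c_i(x_1,\dots,x_n)=V_i^c(x_1\otimes\cdots\otimes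 x_n)$ with strategies $j$ identified with $\delta_\kappa^j$. *)

(* Defs.v *)
From HB Require Import structures.
From mathcomp Require Import all_boot all_order all_algebra all_fingroup.
From mathcomp Require Import mxtens.
Set Implicit Arguments. Unset Strict Implicit. Unset Printing Implicit Defensive.
Import GRing.Theory Num.Theory.
Local Open Scope ring_scope.

(* Kronecker product: (A *t B) from mathcomp-real-closed's mxtens, with the
   standard index convention  (i1,i2) |-> i1 * m2 + i2. *)

Section Defs.
Variable R : realFieldType.

Definition khatri_rao {p q m : nat} (A : 'M[R]_(p, m)) (B : 'M[R]_(q, m))
  : 'M[R]_(p * q, m) :=
  \matrix_(i, j) (col j A *t col j B) i ord0.

Fixpoint khatri_rao_n (k N m : nat) : ('I_m -> 'M[R]_(k, N)) -> 'M[R]_(k ^ m, N) :=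
  match m return ('I_m -> 'M[R]_(k, N)) -> 'M[R]_(k ^ m, N) with
  | 0 => fun _ => const_mx 1
  | m'.+1 => fun F =>
      castmx (esym (expnS k m'), erefl N)
        (khatri_rao (F ord0) (@khatri_rao_n k N m' (fun i => F (lift ord0 i))))
  end.

Lemma Phi_dim (n kappa : nat) (i : 'I_n) :
  (kappa ^ i * kappa * kappa ^ (n - i.+1) = kappa ^ n)%N.
Proof.
by rewrite -expnSr -expnD subnKC ?ltn_ord.
Qed.

Lemma Phi_dim1 (kappa : nat) : (1 * kappa * 1 = kappa)%N.
Proof. by rewrite mul1n muln1. Qed.

(* Phi_i = 1_{kappa^{i-1}}^T (x) I_kappa (x) 1_{kappa^{n-i}}^T, for the
   0-based index i : 'I_n (paper's index i+1). *)
Definition Phi (n kappa : nat) (i : 'I_n) : 'M[R]_(kappa, kappa ^ n) :=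
  castmx (Phi_dim1 kappa, Phi_dim kappa i)
    ((const_mx 1 : 'M[R]_(1, kappa ^ i)) *t (1%:M : 'M[R]_kappa)
       *t (const_mx 1 : 'M[R]_(1, kappa ^ (n - i.+1)))).

Definition Tmx (n kappa : nat) (s : 'S_n) : 'M[R]_(kappa ^ n) :=
  @khatri_rao_n kappa (kappa ^ n) n (fun k => Phi kappa (s^-1%g k)).

Definition Pmx (n : nat) (s : 'S_n) : 'M[R]_n :=
  \matrix_(i, j) ((i == s j)%:R).

Definition sgn (n : nat) (s : 'S_n) : R := (-1) ^+ odd_perm s.

Definition psi (n kappa : nat) (s : 'S_n) : 'M[R]_(n * kappa ^ n) :=
  Pmx s *t (sgn s *: Tmx kappa s).

End Defs.

(* Main.v *)
Require Import Defs.
From HB Require Import structures.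
From mathcomp Require Import all_boot all_order all_algebra all_fingroup.
From mathcomp Require Import mxtens.
From mathcomp Require Import zify.
Import GRing.Theory Num.Theory.
Local Open Scope ring_scope.
Section S.
Variable R : realFieldType.
Variable k : nat.
Local Notation K := k.+1.
Definition digit (m t r : nat) : nat := (r %/ K ^ (m - t.+1) %% K)%N.

Lemma digit_lt m t r : (digit m t r < K)%N.
Proof. exact: ltn_mod. Qed.

Lemma digitSS m t r : (t < m)%N -> digit m.+1 t.+1 r = digit m t (r %% K^m).
Proof.
move=> ht; rewrite /digit subSS.
have hm : (K^m = K^(m - t.+1) * K ^ t.+1)%N by rewrite -expnD subnK.
rewrite hm divn_modl ?dvdn_mulr // mulKn ?expn_gt0 //.
by rewrite modn_dvdm // expnS dvdn_mulr.
Qed.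

Lemma KR_entry N m (F : 'I_m -> 'M[R]_(K, N)) (r : 'I_(K^m)) j :
  khatri_rao_n F r j = \prod_(t < m) F t (inord (digit m t r)) j.
Proof.
elim: m F r => [|m IH] F r /=.
  by rewrite big_ord0 mxE.
rewrite castmxE mxE /= mxE /= !mxE !cast_ord_id IH big_ord_recl.
congr (F _ _ _ * _).
  apply: val_inj; rewrite /= inordK ?digit_lt // /digit subn1 /= modn_small //.
  by rewrite ltn_divLR ?expn_gt0 // -expnS.
apply: eq_bigr => t _; congr (F _ _ _); apply: val_inj.
by rewrite /= !inordK ?digit_lt // digitSS.
Qed.

Lemma Phi_entry n (i : 'I_n) (a : 'I_K) (x : 'I_(K^n)) :
  Phi R K i a x = (val a == digit n i x)%:R.
Proof.
by rewrite /Phi castmxE !mxE /= mul1r mulr1 -val_eqE /= divn1 modn_small.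
Qed.

Definition Tb n (s : 'S_n) (r x : 'I_(K ^ n)) :=
  [forall t : 'I_n, digit n t r == digit n (s^-1%g t) x].

Arguments Tb {n}.

Lemma T_entry n (s : 'S_n) (r x : 'I_(K ^ n)) :
  Tmx R K s r x = (Tb s r x)%:R.
Proof.
rewrite /Tmx KR_entry.
rewrite (eq_bigr (fun t : 'I_n => (digit n t r == digit n (s^-1%g t) x)%:R)); last first.
  by move=> t _; rewrite Phi_entry /= inordK ?digit_lt.
case: (boolP (Tb s r x)) => H.
  by rewrite big1 // => t _; rewrite (eqP (forallP H t)) eqxx.
move: H; rewrite negb_forall => /existsP [t Ht].
by rewrite (bigD1 t) //= (negbTE Ht) mul0r.
Qed.

Lemma digit_inj m r r' : (r < K ^ m)%N -> (r' < K ^ m)%N ->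
  (forall t, t < m -> digit m t r = digit m t r')%N -> r = r'.
Proof.
elim: m r r' => [|m IH] r r'.
  by rewrite expn0; case: r => [|?] //; case: r' => [|?].
move=> hr hr' H.
rewrite (divn_eq r (K ^ m)) (divn_eq r' (K ^ m)).
have h0 := H 0%N isT; rewrite /digit subn1 /= !modn_small in h0; last 2 first.
- by rewrite ltn_divLR ?expn_gt0 // -expnS.
- by rewrite ltn_divLR ?expn_gt0 // -expnS.
rewrite h0; congr (_ + _)%N.
apply: IH; rewrite ?ltn_mod ?expn_gt0 // => t ht.
by rewrite -!digitSS // H.
Qed.

Lemma digit_ex m (f : 'I_m -> nat) : (forall t, f t < K)%N ->
  exists2 r, (r < K ^ m)%N & forall t : 'I_m, digit m t r = f t.
Proof.
elim: m f => [|m IH] f hf.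
  by exists 0%N => // -[].
have [r0 hr0 H0] := IH (fun t => f (lift ord0 t)) (fun t => hf _).
exists (f ord0 * K ^ m + r0)%N.
  have := hf ord0; rewrite expnS; move: (K ^ m)%N hr0 => P; nia.
case=> [[|t] ht].
  rewrite /digit subn1 /= divnMDl ?expn_gt0 // divn_small // addn0 modn_small ?hf //.
  by congr f; apply: val_inj.
rewrite digitSS // modnMDl modn_small //.
have ht' : (t < m)%N by [].
have := H0 (Ordinal ht') => /= ->; by congr f; apply: val_inj; rewrite /= /bump leq0n.
Qed.

Lemma T_mul n (s u : 'S_n) : Tmx R K (s * u) = Tmx R K u *m Tmx R K s.
Proof.
apply/matrixP => r x; rewrite !mxE.
have [y0 hy0 Hy0] := @digit_ex n (fun t : 'I_n => digit n (s^-1%g t) x) (fun t => digit_lt _ _ _).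
pose Y := Ordinal hy0.
rewrite (bigD1 Y) //= big1 ?addr0; last first.
  move=> y hy; rewrite (@T_entry _ s); case: (boolP (Tb s y x)) => H; last by rewrite mulr0.
  case/eqP: hy; apply: val_inj; apply: (@digit_inj n) => //= t ht.
  by rewrite (eqP (forallP H (Ordinal ht))) -(Hy0 (Ordinal ht)).
rewrite (@T_entry _ s) (_ : Tb s Y x = true) ?mulr1; last first.
  by apply/forallP => t /=; rewrite Hy0.
rewrite !T_entry; congr (_%:R); rewrite /Tb.
have E : forall t, digit n ((s * u)^-1%g t) x = digit n (u^-1%g t) Y.
  by move=> t; rewrite invMg permM -(Hy0 (u^-1%g t)).
by congr (nat_of_bool _); apply: eq_forallb => t; rewrite E.
Qed.

Lemma T1 n : Tmx R K (1 : 'S_n) = 1%:M.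
Proof.
apply/matrixP => r x; rewrite T_entry !mxE.
case: (boolP (Tb (1 : 'S_n) r x)) => H.
  suff -> : r = x by rewrite eqxx.
  apply: val_inj; apply: (@digit_inj n) => //= t ht.
  by rewrite (eqP (forallP H (Ordinal ht))) invg1 perm1.
rewrite (_ : (r == x) = false) //; apply/negbTE/eqP => E; move: H; rewrite E => /negP; apply.
by apply/forallP => t; rewrite invg1 perm1.
Qed.
End S.

Lemma Pmx_mul (R : realFieldType) n (s u : 'S_n) : Pmx R (s * u) = Pmx R u *m Pmx R s.
Proof.
apply/matrixP => i j; rewrite !mxE (bigD1 (s j)) //= big1 => [|l hl].
  by rewrite !mxE permM eqxx mulr1 addr0.
by rewrite !mxE (negbTE hl) mulr0.
Qed.

Lemma Pmx1 (R : realFieldType) n : Pmx R (1 : 'S_n) = 1%:M.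
Proof. by apply/matrixP => i j; rewrite !mxE perm1. Qed.

Lemma sgn_mul (R : realFieldType) n (s u : 'S_n) : sgn R (s * u) = sgn R s * sgn R u.
Proof. by rewrite /sgn odd_permM signr_addb. Qed.

Theorem proposition3p18 (R : realFieldType) (n kappa : nat)
    (hn : (2 <= n)%N) (hk : (1 <= kappa)%N) :
  (forall sigma : 'S_n, psi R kappa sigma \in unitmx) /\
  (forall mu sigma : 'S_n,
      psi R kappa (sigma * mu)%g = psi R kappa mu *m psi R kappa sigma).
Proof.
case: kappa hk => // k _.
have Hm : forall mu sigma : 'S_n,
      psi R k.+1 (sigma * mu)%g = psi R k.+1 mu *m psi R k.+1 sigma.
  move=> u s; rewrite /psi Pmx_mul T_mul tensmx_mul; congr (_ *t _).
  by rewrite -scalemxAl -scalemxAr scalerA sgn_mul mulrC.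
split=> // s.
have : psi R k.+1 s *m psi R k.+1 s^-1 \in unitmx.
  rewrite -Hm mulVg /psi Pmx1 T1 /sgn odd_perm1 expr0 scale1r.
  apply: tensmx_unit; rewrite ?unitmx1 //.
    by rewrite -lt0n; apply: leq_trans hn.
  by rewrite expn_eq0.
by rewrite unitmx_mul => /andP [].
Qed.
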